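(* Consider the two-SP bandwidth allocation game with minimum small-cell bandwidth constraints described in the context. This game has a Nash equilibrium, and the Nash equilibrium is unique. Moreover, the total small-cell bandwidth $B_{1,S}+B_{2,S}$ at this equilibrium is at least the total small-cell bandwidth $B_{1,S}^{\mathrm{NE}}+B_{2,S}^{\mathrm{NE}}$ at the Nash equilibrium of the same game without the regulatory constraints.
   Context: Two service providers (SPs) $i=1,2$. SP $i$ owns bandwidth $B_i>0$ and chooses macro-cell bandwidth $B_{i,M}\ge0$ and small-cell bandwidth $B_{i,S}$ with $B_{i,M}+B_{i,S}\le B_i$ and $B_{i,S}\ge B_{i,S}^0$ (regulatory constraint), where $0\le B_{i,S}^0\le B_i$ are given; ''without the regulatory constraints'' means $B_{i,S}^0=0$. Parameters: $R_0>0$, $\lambda_S>1$, a mass $N_m>0$ of mobile users (served only by macro-cells) and a mass $N_f>0$ of fixed users, each with utility $u(r)=r^{1-\alpha}/(1-\alpha)$, $\alpha\in(0,1)$. SPs set per-unit-rate prices in a second stage after bandwidths are fixed; the second-stage price equilibrium is market-clearing, so that with $R_M=\frac{(B_{1,M}+B_{2,M})R_0}{N_m}$ and $R_S=\frac{\lambda_S(B_{1,S}+B_{2,S})R_0}{N_f}$ the macro and small-cell prices are $u'(R_M)=R_M^{-\alpha}$ and $u'(R_S)=R_S^{-\alpha}$. The payoff of SP $i$ in the bandwidth game is its revenue $S_i=\lambda_SB_{i,S}R_0\,u'(R_S)+B_{i,M}R_0\,u'(R_M)$, and a Nash equilibrium is a pair of feasible allocations in which each SP maximizes $S_i$ given the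 other's allocation. Without the regulatory constraints the unique Nash equilibrium is $B_{i,S}^{\mathrm{NE}}=\frac{N_f\lambda_S^{1/\alpha-1}B_i}{N_f\lambda_S^{1/\alpha-1}+N_m}$, $B_{i,M}^{\mathrm{NE}}=\frac{N_mB_i}{N_f\lambda_S^{1/\alpha-1}+N_m}$, $i=1,2$. *)

(* Defs.v *)
From Stdlib Require Import Reals.
Open Scope R_scope.

(* Feasible allocation of SP i: macro bandwidth bM, small-cell bandwidth bS,
   total bandwidth Bi, regulatory minimum Bi0. *)
Definition feasible (Bi Bi0 bM bS : R) : Prop :=
  0 <= bM /\ Bi0 <= bS /\ bM + bS <= Bi.

(* Marginal utility u'(r) = r^(-alpha) for u(r) = r^(1-alpha)/(1-alpha).
   (Rpower is only meaningful for r > 0; it only appears multiplied by a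
   bandwidth that is 0 whenever r = 0.) *)
Definition uprime (alpha r : R) : R := Rpower r (- alpha).

Definition RM (R0 Nm bM oM : R) : R := (bM + oM) * R0 / Nm.
Definition RS (R0 lam Nf bS oS : R) : R := lam * (bS + oS) * R0 / Nf.

Definition revenue (R0 lam Nm Nf alpha bM bS oM oS : R) : R :=
  lam * bS * R0 * uprime alpha (RS R0 lam Nf bS oS)
  + bM * R0 * uprime alpha (RM R0 Nm bM oM).

Definition is_NE (R0 lam Nm Nf alpha B1 B2 B10 B20 : R)
    (b1M b1S b2M b2S : R) : Prop :=
  feasible B1 B10 b1M b1S /\ feasible B2 B20 b2M b2S /\
  (forall cM cS, feasible B1 B10 cM cS ->
     revenue R0 lam Nm Nf alpha cM cS b2M b2S
       <= revenue R0 lam Nm Nf alpha b1M b1S b2M b2S) /\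
  (forall cM cS, feasible B2 B20 cM cS ->
     revenue R0 lam Nm Nf alpha cM cS b1M b1S
       <= revenue R0 lam Nm Nf alpha b2M b2S b1M b1S).

Definition BS_NE (lam Nm Nf alpha Bi : R) : R :=
  Nf * Rpower lam (1 / alpha - 1) * Bi / (Nf * Rpower lam (1 / alpha - 1) + Nm).

(* Main.v *)
Require Import Defs.
From Stdlib Require Import Reals Lra.
From Coquelicot Require Import Coquelicot.
Open Scope R_scope.


Lemma Rpow_pos x y : 0 < Rpower x y.
Proof. unfold Rpower; apply exp_pos. Qed.

Lemma ln_le_sub1 z : 0 < z -> ln z <= z - 1.
Proof. intro Hz. pose proof (exp_ineq1_le (ln z)). rewrite exp_ln in H; lra. Qed.

Lemma Rpow_neg_lt a x y : 0 < a -> 0 < x < y -> Rpower y (-a) < Rpower x (-a).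
Proof.
  intros Ha Hxy. rewrite !Rpower_Ropp.
  apply Rinv_lt_contravar.
  - apply Rmult_lt_0_compat; apply Rpow_pos.
  - apply Rlt_Rpower_l; lra.
Qed.

Lemma Rpow_neg_le a x y : 0 < a -> 0 < x <= y -> Rpower y (-a) <= Rpower x (-a).
Proof.
  intros Ha [Hx [Hxy|Hxy]].
  - left; apply Rpow_neg_lt; lra.
  - subst; lra.
Qed.

Lemma bern1 a z : 0 < a -> 0 < z -> 1 - a * (z - 1) <= Rpower z (-a).
Proof.
  intros Ha Hz. unfold Rpower.
  pose proof (exp_ineq1_le (- a * ln z)).
  pose proof (ln_le_sub1 z Hz). nra.
Qed.

Lemma bern2 a z : 0 < a < 1 -> 0 < z -> z * Rpower z (-a) <= 1 + (1 - a) * (z - 1).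
Proof.
  intros Ha Hz.
  assert (E : z * Rpower z (-a) = exp ((1 - a) * ln z)).
  { unfold Rpower. rewrite <- (exp_ln z) at 1 by exact Hz.
    rewrite <- exp_plus. f_equal. ring. }
  rewrite E. set (c := ln z).
  assert (Ez : z = exp c) by (unfold c; rewrite exp_ln; auto).
  rewrite Ez.
  set (e := exp ((1 - a) * c)).
  assert (He : 0 < e) by apply exp_pos.
  assert (H1 : exp c = e * exp (a * c)).
  { unfold e; rewrite <- exp_plus; f_equal; ring. }
  assert (H2 : 1 = e * exp (- ((1 - a) * c))).
  { unfold e; rewrite <- exp_plus. replace ((1 - a) * c + - ((1 - a) * c)) with 0 by ring. now rewrite exp_0. }
  pose proof (exp_ineq1_le (a * c)).
  pose proof (exp_ineq1_le (- ((1 - a) * c))).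
  set (g := exp (a * c)) in *. set (f := exp (- ((1 - a) * c))) in *.
  assert (X1 : e * (1 + a * c) <= e * g) by (apply Rmult_le_compat_l; lra).
  assert (X2 : e * (1 + - ((1 - a) * c)) <= e * f) by (apply Rmult_le_compat_l; lra).
  assert (X3 : (1 - a) * (e * (1 + a * c)) <= (1 - a) * (e * g)) by (apply Rmult_le_compat_l; lra).
  assert (X4 : a * (e * (1 + - ((1 - a) * c))) <= a * (e * f)) by (apply Rmult_le_compat_l; lra).
  rewrite H1. rewrite <- H2 in X4. nra.
Qed.

Definition gf a K x o := x * Rpower (K * (x + o)) (- a).

Lemma g_tang a K x o y : 0 < a < 1 -> 0 < K -> 0 <= o -> 0 <= x -> 0 < x + o -> 0 <= y ->
  gf a K y o <= gf a K x o + Rpower (K * (x + o)) (- a) * (1 - a * x / (x + o)) * (y - x).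
Proof.
  intros Ha HK Ho Hx HX Hy. unfold gf.
  set (X := x + o) in *. set (p := Rpower (K * X) (- a)).
  assert (Hp : 0 < p) by apply Rpow_pos.
  destruct (Req_dec y 0) as [Hy0|Hy0].
  - subst y. rewrite Rmult_0_l.
    assert (0 <= p * (a * x * x / X)).
    { apply Rmult_le_pos; [lra|]. unfold Rdiv. apply Rmult_le_pos; [|left; apply Rinv_0_lt_compat; lra].
      nra. }
    replace (x * p + p * (1 - a * x / X) * (0 - x)) with (p * (a * x * x / X)) by (field; lra).
    lra.
  - set (z := (y + o) / X).
    assert (Hz : 0 < z) by (unfold z; apply Rdiv_lt_0_compat; lra).
    assert (E : Rpower (K * (y + o)) (- a) = p * Rpower z (- a)).
    { unfold p. rewrite Rpower_mult_distr by nra. f_equal. unfold z. field. lra. }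
    rewrite E. set (q := Rpower z (-a)).
    pose proof (bern1 a z ltac:(lra) Hz) as B1.
    pose proof (bern2 a z Ha Hz) as B2. fold q in B1, B2.
    assert (Ey : y = z * X - o) by (unfold z; field; lra).
    assert (Hyq : y * q <= x + (1 - a * x / X) * (y - x)).
    { assert (y * q = X * (z * q) - o * q) by (rewrite Ey; ring).
      rewrite H.
      assert (X * (z * q) <= X * (1 + (1 - a) * (z - 1))) by (apply Rmult_le_compat_l; lra).
      assert (o * (1 - a * (z - 1)) <= o * q) by (apply Rmult_le_compat_l; lra).
      assert (x + (1 - a * x / X) * (y - x) = X * (1 + (1 - a) * (z - 1)) - o * (1 - a * (z - 1))).
      { rewrite Ey. unfold X. field. fold X. lra. }
      lra. }
    assert (p * (y * q) <= p * (x + (1 - a * x / X) * (y - x))) by (apply Rmult_le_compat_l; lra).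
    nra.
Qed.

Lemma g_incr a K x y o : 0 < a < 1 -> 0 < K -> 0 <= o -> 0 <= x < y -> gf a K x o < gf a K y o.
Proof.
  intros Ha HK Ho Hxy.
  pose proof (g_tang a K y o x Ha HK Ho ltac:(lra) ltac:(lra) ltac:(lra)).
  assert (Hp : 0 < Rpower (K * (y + o)) (- a)) by apply Rpow_pos.
  assert (0 < 1 - a * y / (y + o)).
  { replace (1 - a * y / (y + o)) with ((y + o - a * y) / (y + o)) by (field; lra).
    apply Rdiv_lt_0_compat; nra. }
  assert (0 < Rpower (K * (y + o)) (- a) * (1 - a * y / (y + o)) * (y - x)).
  { apply Rmult_lt_0_compat; [apply Rmult_lt_0_compat|]; lra. }
  lra.
Qed.

Lemma g_lower a K x x' o : 0 < a -> 0 < K -> 0 <= o -> 0 <= x <= x' ->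
  x * Rpower (K * (x' + o)) (- a) <= gf a K x o.
Proof.
  intros Ha HK Ho Hx. unfold gf.
  destruct (Req_dec x 0) as [H0|H0].
  - subst; lra.
  - apply Rmult_le_compat_l; [lra|]. apply Rpow_neg_le; [lra|]. split; nra.
Qed.

Lemma g_deriv a K x o d : 0 < K -> 0 < x + o ->
  derivable_pt_lim (fun t => gf a K (x + d * t) o) 0
    (d * Rpower (K * (x + o)) (- a) * (1 - a * x / (x + o))).
Proof.
  intros HK HX. apply is_derive_Reals. unfold gf, Rpower.
  evar (l : R).
  assert (is_derive (fun t => (x + d * t) * exp (- a * ln (K * (x + d * t + o)))) 0 l).
  { unfold l. auto_derive.
    - rewrite Rmult_0_r, Rplus_0_r. nra.
    - reflexivity. }
  replace (d * exp (- a * ln (K * (x + o))) * (1 - a * x / (x + o))) with l.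
  - exact H.
  - unfold l. rewrite !Rmult_0_r, !Rplus_0_r. field. split; [lra|]. apply Rgt_not_eq. lra.
Qed.

Lemma deriv_sign_r h l d : derivable_pt_lim h 0 l -> 0 < d ->
  (forall t, 0 < t < d -> h t <= h 0) -> l <= 0.
Proof.
  intros Hd Hdp Hle. destruct (Rle_lt_dec l 0) as [|Hl]; [auto|exfalso].
  destruct (Hd l Hl) as [del Hdel].
  set (t := Rmin d del / 2).
  assert (Ht0 : 0 < t) by (unfold t; pose proof (cond_pos del); apply Rmin_case; lra).
  assert (Ht1 : t < d) by (unfold t; pose proof (Rmin_l d del); lra).
  assert (Ht2 : t < del) by (unfold t; pose proof (Rmin_r d del); pose proof (cond_pos del); lra).
  specialize (Hdel t ltac:(lra) ltac:(rewrite Rabs_right; lra)).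
  rewrite Rplus_0_l in Hdel.
  specialize (Hle t ltac:(lra)).
  apply Rabs_def2 in Hdel. destruct Hdel as [_ H2].
  assert (0 < (h t - h 0) / t) by lra.
  assert (h t - h 0 = ((h t - h 0) / t) * t) by (field; lra).
  nra.
Qed.

Lemma deriv_sign_l h l d : derivable_pt_lim h 0 l -> 0 < d ->
  (forall t, - d < t < 0 -> h t <= h 0) -> 0 <= l.
Proof.
  intros Hd Hdp Hle. destruct (Rle_lt_dec 0 l) as [|Hl]; [auto|exfalso].
  destruct (Hd (- l) ltac:(lra)) as [del Hdel].
  set (t := - (Rmin d del / 2)).
  assert (Ht0 : t < 0) by (unfold t; pose proof (cond_pos del); apply Rmin_case; lra).
  assert (Ht1 : - d < t) by (unfold t; pose proof (Rmin_l d del); lra).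
  assert (Ht2 : - t < del) by (unfold t; pose proof (Rmin_r d del); pose proof (cond_pos del); lra).
  specialize (Hdel t ltac:(lra) ltac:(rewrite Rabs_left; lra)).
  rewrite Rplus_0_l in Hdel.
  specialize (Hle t ltac:(lra)).
  apply Rabs_def2 in Hdel. destruct Hdel as [H1 _].
  assert ((h t - h 0) / t < 0) by lra.
  assert (h t - h 0 = ((h t - h 0) / t) * t) by (field; lra).
  nra.
Qed.

Definition prm (R0 lam Nm Nf a : R) := 0 < R0 /\ 1 < lam /\ 0 < Nm /\ 0 < Nf /\ 0 < a < 1.

Lemma rev_eq R0 lam Nm Nf a bM bS oM oS : 0 < Nm -> 0 < Nf ->
  revenue R0 lam Nm Nf a bM bS oM oS =
  R0 * (lam * gf a (lam * R0 / Nf) bS oS + gf a (R0 / Nm) bM oM).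
Proof.
  intros HNm HNf. unfold revenue, uprime, RS, RM, gf.
  replace (lam * (bS + oS) * R0 / Nf) with (lam * R0 / Nf * (bS + oS)) by (field; lra).
  replace ((bM + oM) * R0 / Nm) with (R0 / Nm * (bM + oM)) by (field; lra).
  ring.
Qed.

Definition BR R0 lam Nm Nf a B B0 m s om os :=
  forall cM cS, feasible B B0 cM cS ->
    revenue R0 lam Nm Nf a cM cS om os <= revenue R0 lam Nm Nf a m s om os.

Definition Dv R0 lam Nm Nf a S s m M :=
  lam * Rpower (lam * R0 / Nf * S) (- a) * (1 - a * s / S)
  - Rpower (R0 / Nm * M) (- a) * (1 - a * m / M).

Lemma cpos R0 lam Nm Nf a : prm R0 lam Nm Nf a -> 0 < lam * R0 / Nf /\ 0 < R0 / Nm.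
Proof.
  intros (?&?&?&?&?). split; unfold Rdiv; repeat apply Rmult_lt_0_compat; try apply Rinv_0_lt_compat; lra.
Qed.

Lemma tight R0 lam Nm Nf a B B0 m s om os : prm R0 lam Nm Nf a ->
  feasible B B0 m s -> 0 <= om -> BR R0 lam Nm Nf a B B0 m s om os -> m + s = B.
Proof.
  intros Hp Hf Hom HBR. pose proof (cpos _ _ _ _ _ Hp) as [HcS HcM].
  destruct Hp as (HR0&Hl&HNm&HNf&Ha). destruct Hf as (Hm&Hs&HmB).
  destruct (Req_dec (m + s) B) as [|Hne]; [auto|exfalso].
  specialize (HBR (B - s) s ltac:(unfold feasible; lra)).
  rewrite !rev_eq in HBR by lra.
  pose proof (g_incr a (R0 / Nm) m (B - s) om Ha HcM Hom ltac:(lra)).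
  nra.
Qed.

Lemma kkt R0 lam Nm Nf a B B0 m s om os : prm R0 lam Nm Nf a ->
  feasible B B0 m s -> 0 <= om -> 0 <= os -> BR R0 lam Nm Nf a B B0 m s om os ->
  0 < s + os -> 0 < m + om ->
  (0 < m -> Dv R0 lam Nm Nf a (s + os) s m (m + om) <= 0) /\
  (B0 < s -> 0 <= Dv R0 lam Nm Nf a (s + os) s m (m + om)).
Proof.
  intros Hp Hf Hom Hos HBR HS HM. pose proof (cpos _ _ _ _ _ Hp) as [HcS HcM].
  destruct Hp as (HR0&Hl&HNm&HNf&Ha). destruct Hf as (Hm&Hs&HmB).
  set (h := fun t => R0 * (lam * gf a (lam * R0 / Nf) (s + 1 * t) os + gf a (R0 / Nm) (m + -1 * t) om)).
  assert (Hh : forall t, 0 <= m - t -> B0 <= s + t -> h t <= h 0).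
  { intros t H1 H2. specialize (HBR (m - t) (s + t) ltac:(unfold feasible; lra)).
    rewrite !rev_eq in HBR by lra. unfold h.
    replace (s + 1 * t) with (s + t) by ring. replace (m + -1 * t) with (m - t) by ring.
    replace (s + 1 * 0) with s by ring. replace (m + -1 * 0) with m by ring. exact HBR. }
  assert (Hd : derivable_pt_lim h 0 (R0 * Dv R0 lam Nm Nf a (s + os) s m (m + om))).
  { pose proof (g_deriv a (lam * R0 / Nf) s os 1 HcS HS) as D1.
    pose proof (g_deriv a (R0 / Nm) m om (-1) HcM HM) as D2.
    pose proof (derivable_pt_lim_scal _ lam 0 _ D1) as D1'.
    pose proof (derivable_pt_lim_plus _ _ 0 _ _ D1' D2) as D3.
    pose proof (derivable_pt_lim_scal _ R0 0 _ D3) as D4.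
    replace (R0 * Dv R0 lam Nm Nf a (s + os) s m (m + om)) with
      (R0 * (lam * (1 * Rpower (lam * R0 / Nf * (s + os)) (- a) * (1 - a * s / (s + os))) +
        -1 * Rpower (R0 / Nm * (m + om)) (- a) * (1 - a * m / (m + om)))) by (unfold Dv; ring).
    exact D4. }
  split.
  - intro Hm0. apply deriv_sign_r with (d := m) in Hd; [| lra |].
    + nra.
    + intros t Ht. apply Hh; lra.
  - intro Hs0. apply deriv_sign_l with (d := s - B0) in Hd; [| lra |].
    + nra.
    + intros t Ht. apply Hh; lra.
Qed.

Lemma one_minus_pos a x X : 0 < a < 1 -> 0 <= x <= X -> 0 < X -> 0 < 1 - a * x / X.
Proof.
  intros Ha Hx HX.
  replace (1 - a * x / X) with ((X - a * x) / X) by (field; lra).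
  apply Rdiv_lt_0_compat; nra.
Qed.

Lemma suff R0 lam Nm Nf a B B0 m s om os : prm R0 lam Nm Nf a ->
  feasible B B0 m s -> m + s = B -> 0 <= om -> 0 <= os -> 0 < s + os -> 0 < m + om ->
  (s < B -> Dv R0 lam Nm Nf a (s + os) s m (m + om) <= 0) ->
  (B0 < s -> 0 <= Dv R0 lam Nm Nf a (s + os) s m (m + om)) ->
  0 <= B0 -> BR R0 lam Nm Nf a B B0 m s om os.
Proof.
  intros Hp Hf Ht Hom Hos HS HM K1 K2 HB00. pose proof (cpos _ _ _ _ _ Hp) as [HcS HcM].
  destruct Hp as (HR0&Hl&HNm&HNf&Ha). destruct Hf as (Hm&Hs&HmB).
  intros cM cS [Hc1 [Hc2 Hc3]].
  assert (HB0 : 0 <= B0 \/ B0 < 0) by lra.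
  rewrite !rev_eq by lra.
  assert (T1 := g_tang a (lam * R0 / Nf) s os cS Ha HcS Hos ltac:(lra) HS ltac:(lra)).
  assert (T2 := g_tang a (R0 / Nm) m om cM Ha HcM Hom Hm HM Hc1).
  set (pS := Rpower (lam * R0 / Nf * (s + os)) (- a)) in *.
  set (pM := Rpower (R0 / Nm * (m + om)) (- a)) in *.
  assert (HpM : 0 < pM) by apply Rpow_pos.
  assert (HuM : 0 < 1 - a * m / (m + om)) by (apply one_minus_pos; lra).
  set (A := lam * pS * (1 - a * s / (s + os))).
  set (Bm := pM * (1 - a * m / (m + om))).
  assert (HBm : 0 < Bm) by (unfold Bm; apply Rmult_lt_0_compat; lra).
  assert (E : Dv R0 lam Nm Nf a (s + os) s m (m + om) = A - Bm) by (unfold Dv, A, Bm, pS, pM; ring).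
  rewrite E in K1, K2.
  assert (Hbr : A * (cS - s) + Bm * (cM - m) <= 0).
  { assert (Bm * (cM - m) <= Bm * (s - cS)) by (apply Rmult_le_compat_l; lra).
    destruct (Rlt_le_dec s cS).
    - assert (A - Bm <= 0) by (apply K1; lra). nra.
    - destruct (Rlt_le_dec B0 s).
      + assert (0 <= A - Bm) by (apply K2; lra). nra.
      + assert (cS = s) by lra. subst cS. nra. }
  assert (lam * gf a (lam * R0 / Nf) cS os <= lam * (gf a (lam * R0 / Nf) s os + pS * (1 - a * s / (s + os)) * (cS - s))) by (apply Rmult_le_compat_l; lra).
  assert (R0 * (lam * gf a (lam * R0 / Nf) cS os + gf a (R0 / Nm) cM om - (lam * gf a (lam * R0 / Nf) s os + gf a (R0 / Nm) m om)) <= R0 * 0).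
  { apply Rmult_le_compat_l; [lra|]. unfold A, Bm in Hbr. nra. }
  nra.
Qed.

Lemma spos R0 lam Nm Nf a B B0 m s om : prm R0 lam Nm Nf a -> 0 < B -> 0 <= B0 ->
  feasible B B0 m s -> 0 <= om -> BR R0 lam Nm Nf a B B0 m s om 0 -> 0 < s.
Proof.
  intros Hp HB HB0 Hf Hom HBR. pose proof (cpos _ _ _ _ _ Hp) as [HcS HcM].
  pose proof (tight _ _ _ _ _ _ _ _ _ _ _ Hp Hf Hom HBR) as Ht.
  destruct Hp as (HR0&Hl&HNm&HNf&Ha). destruct Hf as (Hm&Hs&HmB).
  destruct (Rlt_le_dec 0 s) as [|Hs0]; [auto|exfalso].
  assert (s = 0) by lra. subst s. assert (m = B) by lra. subst m.
  set (t := Rmin B (R0 / Nm * (B + om) / (lam * R0 / Nf))).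
  assert (Ht0 : 0 < t).
  { unfold t. apply Rmin_case; [lra|]. apply Rdiv_lt_0_compat; [nra|lra]. }
  assert (Ht1 : t <= B) by apply Rmin_l.
  assert (Ht2 : lam * R0 / Nf * t <= R0 / Nm * (B + om)).
  { assert (t <= R0 / Nm * (B + om) / (lam * R0 / Nf)) by apply Rmin_r.
    apply (Rmult_le_compat_l (lam * R0 / Nf)) in H; [|lra].
    replace (lam * R0 / Nf * (R0 / Nm * (B + om) / (lam * R0 / Nf))) with (R0 / Nm * (B + om)) in H
      by (field; repeat split; lra). exact H. }
  specialize (HBR (B - t) t ltac:(unfold feasible; lra)).
  rewrite !rev_eq in HBR by lra.
  set (pM := Rpower (R0 / Nm * (B + om)) (- a)).
  assert (HpM : 0 < pM) by apply Rpow_pos.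
  assert (E1 : gf a (lam * R0 / Nf) 0 0 = 0) by (unfold gf; ring).
  assert (E2 : gf a (R0 / Nm) B om = B * pM) by reflexivity.
  assert (L1 : t * pM <= gf a (lam * R0 / Nf) t 0).
  { unfold gf. apply Rmult_le_compat_l; [lra|]. rewrite Rplus_0_r. apply Rpow_neg_le; nra. }
  assert (L2 : (B - t) * pM <= gf a (R0 / Nm) (B - t) om).
  { apply g_lower; lra. }
  rewrite E1, E2 in HBR.
  assert (lam * (t * pM) <= lam * gf a (lam * R0 / Nf) t 0) by (apply Rmult_le_compat_l; lra).
  assert (0 < R0 * ((lam - 1) * t * pM)) by (apply Rmult_lt_0_compat; [lra|]; apply Rmult_lt_0_compat; nra).
  nra.
Qed.

Lemma mpos R0 lam Nm Nf a B B0 m s os : prm R0 lam Nm Nf a -> B0 < B -> 0 <= B0 ->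
  feasible B B0 m s -> 0 <= os -> BR R0 lam Nm Nf a B B0 m s 0 os -> 0 < m.
Proof.
  intros Hp HB HB0 Hf Hos HBR. pose proof (cpos _ _ _ _ _ Hp) as [HcS HcM].
  pose proof (tight _ _ _ _ _ _ _ _ _ _ _ Hp Hf (Rle_refl 0) HBR) as Ht.
  destruct Hp as (HR0&Hl&HNm&HNf&Ha). destruct Hf as (Hm&Hs&HmB).
  destruct (Rlt_le_dec 0 m) as [|Hm0]; [auto|exfalso].
  assert (m = 0) by lra. subst m. assert (s = B) by lra. subst s.
  set (pS := Rpower (lam * R0 / Nf * (B + os)) (- a)).
  assert (HpS : 0 < pS) by apply Rpow_pos.
  set (Q := 2 * lam * pS).
  assert (HQ : 0 < Q) by (unfold Q; apply Rmult_lt_0_compat; lra).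
  set (T := Rpower Q (- / a) / (R0 / Nm)).
  assert (HT : 0 < T) by (unfold T; apply Rdiv_lt_0_compat; [apply Rpow_pos|lra]).
  assert (ET : Rpower (R0 / Nm * T) (- a) = Q).
  { unfold T. replace (R0 / Nm * (Rpower Q (- / a) / (R0 / Nm))) with (Rpower Q (- / a))
      by (field; repeat split; lra).
    rewrite Rpower_mult. replace (- / a * - a) with 1 by (field; lra). apply Rpower_1; lra. }
  set (t := Rmin (B - B0) T).
  assert (Ht0 : 0 < t) by (unfold t; apply Rmin_case; lra).
  assert (Ht1 : t <= B - B0) by apply Rmin_l.
  assert (Ht2 : t <= T) by apply Rmin_r.
  specialize (HBR t (B - t) ltac:(unfold feasible; lra)).
  rewrite !rev_eq in HBR by lra.
  assert (E1 : gf a (R0 / Nm) 0 0 = 0) by (unfold gf; ring).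
  assert (E2 : gf a (lam * R0 / Nf) B os = B * pS) by reflexivity.
  assert (L1 : t * Q <= gf a (R0 / Nm) t 0).
  { unfold gf. apply Rmult_le_compat_l; [lra|]. rewrite Rplus_0_r. rewrite <- ET.
    apply Rpow_neg_le; [lra|]. split; [nra|]. apply Rmult_le_compat_l; lra. }
  assert (L2 : (B - t) * pS <= gf a (lam * R0 / Nf) (B - t) os).
  { apply g_lower; lra. }
  rewrite E1, E2 in HBR.
  assert (lam * ((B - t) * pS) <= lam * gf a (lam * R0 / Nf) (B - t) os) by (apply Rmult_le_compat_l; lra).
  assert (0 < R0 * (lam * t * pS)) by (apply Rmult_lt_0_compat; [lra|]; apply Rmult_lt_0_compat; nra).
  unfold Q in L1. nra.
Qed.

Lemma div_le_cross a b c d : 0 < b -> 0 < d -> a * d <= c * b -> a / b <= c / d.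
Proof.
  intros Hb Hd H.
  assert (0 <= (c * b - a * d) / (b * d)).
  { unfold Rdiv. apply Rmult_le_pos; [lra|]. left; apply Rinv_0_lt_compat; nra. }
  replace ((c * b - a * d) / (b * d)) with (c / d - a / b) in H0 by (field; lra). lra.
Qed.

Lemma div_lt_cross a b c d : 0 < b -> 0 < d -> a * d < c * b -> a / b < c / d.
Proof.
  intros Hb Hd H.
  assert (0 < (c * b - a * d) / (b * d)).
  { unfold Rdiv. apply Rmult_lt_0_compat; [lra|]. apply Rinv_0_lt_compat; nra. }
  replace ((c * b - a * d) / (b * d)) with (c / d - a / b) in H0 by (field; lra). lra.
Qed.

Lemma Dv_eq R0 lam Nm Nf a S s m M :
  Dv R0 lam Nm Nf a S s m M =
  lam * Rpower (lam * R0 / Nf * S) (- a) * (1 - a * (s / S))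
  - Rpower (R0 / Nm * M) (- a) * (1 - a * (m / M)).
Proof. unfold Dv, Rdiv. ring. Qed.

Lemma cmp R0 lam Nm Nf a S S' M M' s s' m m' : prm R0 lam Nm Nf a ->
  0 < S -> S <= S' -> 0 < M' -> S + M = S' + M' -> 0 <= s < s' -> 0 <= m' ->
  s' - s = m - m' -> s <= S -> s' <= S' -> m <= M -> m' <= M' -> S' - S <= s' - s ->
  Dv R0 lam Nm Nf a S' s' m' M' < Dv R0 lam Nm Nf a S s m M.
Proof.
  intros Hp HS HSS HM' Hsum Hs Hm' Hd Hs1 Hs2 Hm1 Hm2 Hdd.
  pose proof (cpos _ _ _ _ _ Hp) as [HcS HcM].
  destruct Hp as (HR0&Hl&HNm&HNf&Ha).
  rewrite !Dv_eq.
  assert (HM : 0 < M) by lra.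
  set (pS := Rpower (lam * R0 / Nf * S) (- a)).
  set (pS' := Rpower (lam * R0 / Nf * S') (- a)).
  set (pM := Rpower (R0 / Nm * M) (- a)).
  set (pM' := Rpower (R0 / Nm * M') (- a)).
  assert (HpS : 0 < pS) by apply Rpow_pos.
  assert (HpS' : 0 < pS') by apply Rpow_pos.
  assert (HpM : 0 < pM) by apply Rpow_pos.
  assert (HpM' : 0 < pM') by apply Rpow_pos.
  assert (LS : pS' <= pS) by (unfold pS, pS'; apply Rpow_neg_le; [lra|]; split; [nra|]; apply Rmult_le_compat_l; lra).
  assert (LM : pM <= pM') by (unfold pM, pM'; apply Rpow_neg_le; [lra|]; split; [nra|]; apply Rmult_le_compat_l; lra).
  assert (Lt : s / S <= s' / S') by (apply div_le_cross; nra).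
  assert (Lu : m' / M' <= m / M) by (apply div_le_cross; nra).
  assert (Ht' : s' / S' <= 1) by (pose proof (div_le_cross s' S' 1 1); rewrite Rdiv_1_r in H; apply H; lra).
  assert (Hu : m / M <= 1) by (pose proof (div_le_cross m M 1 1); rewrite Rdiv_1_r in H; apply H; lra).
  assert (Hu' : 0 <= m' / M') by (unfold Rdiv; apply Rmult_le_pos; [lra|left; apply Rinv_0_lt_compat; lra]).
  assert (C2 : pM * (1 - a * (m / M)) <= pM' * (1 - a * (m' / M'))).
  { assert (pM * (1 - a * (m / M)) <= pM * (1 - a * (m' / M'))) by (apply Rmult_le_compat_l; nra).
    assert (pM * (1 - a * (m' / M')) <= pM' * (1 - a * (m' / M'))) by (apply Rmult_le_compat_r; nra).
    lra. }
  assert (C1 : lam * pS' * (1 - a * (s' / S')) < lam * pS * (1 - a * (s / S))).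
  { destruct (Rlt_le_dec S S') as [HSl|HSe].
    - assert (pS' < pS) by (unfold pS, pS'; apply Rpow_neg_lt; [lra|]; split; [nra|]; apply Rmult_lt_compat_l; lra).
      assert (lam * pS' * (1 - a * (s' / S')) < lam * pS * (1 - a * (s' / S'))).
      { apply Rmult_lt_compat_r; [nra|]. apply Rmult_lt_compat_l; lra. }
      assert (lam * pS * (1 - a * (s' / S')) <= lam * pS * (1 - a * (s / S))).
      { apply Rmult_le_compat_l; nra. }
      lra.
    - assert (S = S') by lra. subst S'.
      assert (s / S < s' / S) by (apply div_lt_cross; nra).
      assert (lam * pS' * (1 - a * (s' / S)) < lam * pS' * (1 - a * (s / S))).
      { apply Rmult_lt_compat_l; nra. }
      assert (E : pS = pS') by reflexivity. rewrite E. lra. }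
  lra.
Qed.

Definition facts R0 lam Nm Nf a B1 B2 B10 B20 m1 s1 m2 s2 :=
  m1 = B1 - s1 /\ m2 = B2 - s2 /\ B10 <= s1 /\ B20 <= s2 /\ 0 <= m1 /\ 0 <= m2 /\
  0 < s1 + s2 /\ 0 < m1 + m2 /\
  (0 < m1 -> Dv R0 lam Nm Nf a (s1 + s2) s1 m1 (m1 + m2) <= 0) /\
  (B10 < s1 -> 0 <= Dv R0 lam Nm Nf a (s1 + s2) s1 m1 (m1 + m2)) /\
  (0 < m2 -> Dv R0 lam Nm Nf a (s1 + s2) s2 m2 (m1 + m2) <= 0) /\
  (B20 < s2 -> 0 <= Dv R0 lam Nm Nf a (s1 + s2) s2 m2 (m1 + m2)).

Lemma Dv_sum R0 lam Nm Nf a s1 s2 m1 m2 : 0 < s1 + s2 -> 0 < m1 + m2 ->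
  Dv R0 lam Nm Nf a (s1 + s2) s1 m1 (m1 + m2) + Dv R0 lam Nm Nf a (s1 + s2) s2 m2 (m1 + m2)
  = (2 - a) * (lam * Rpower (lam * R0 / Nf * (s1 + s2)) (- a) - Rpower (R0 / Nm * (m1 + m2)) (- a)).
Proof. intros. unfold Dv. field. lra. Qed.

Lemma uniq_le R0 lam Nm Nf a B1 B2 B10 B20 m1 s1 m2 s2 m1' s1' m2' s2' :
  prm R0 lam Nm Nf a -> 0 <= B10 -> 0 <= B20 ->
  facts R0 lam Nm Nf a B1 B2 B10 B20 m1 s1 m2 s2 ->
  facts R0 lam Nm Nf a B1 B2 B10 B20 m1' s1' m2' s2' ->
  s1 + s2 <= s1' + s2' -> s1 = s1' /\ s2 = s2'.
Proof.
  intros Hp HB10 HB20 F F' HSS.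
  pose proof (cpos _ _ _ _ _ Hp) as [HcS HcM].
  destruct F as (E1&E2&H1&H2&Hm1&Hm2&HS&HM&K1&K2&K3&K4).
  destruct F' as (E1'&E2'&H1'&H2'&Hm1'&Hm2'&HS'&HM'&K1'&K2'&K3'&K4').
  destruct (Rlt_le_dec s1 s1') as [L1|L1]; destruct (Rlt_le_dec s2 s2') as [L2|L2].
  - exfalso.
    specialize (K1 ltac:(lra)). specialize (K3 ltac:(lra)).
    specialize (K2' ltac:(lra)). specialize (K4' ltac:(lra)).
    pose proof (Dv_sum R0 lam Nm Nf a s1 s2 m1 m2 HS HM).
    pose proof (Dv_sum R0 lam Nm Nf a s1' s2' m1' m2' HS' HM').
    destruct Hp as (HR0&Hl&HNm&HNf&Ha).
    assert (Rpower (lam * R0 / Nf * (s1' + s2')) (- a) < Rpower (lam * R0 / Nf * (s1 + s2)) (- a)).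
    { apply Rpow_neg_lt; [lra|]. split; [nra|]. apply Rmult_lt_compat_l; lra. }
    assert (Rpower (R0 / Nm * (m1 + m2)) (- a) < Rpower (R0 / Nm * (m1' + m2')) (- a)).
    { apply Rpow_neg_lt; [lra|]. split; [nra|]. apply Rmult_lt_compat_l; lra. }
    match goal with
    | [ _ : Rpower ?A' (- a) < Rpower ?A (- a), _ : Rpower ?C (- a) < Rpower ?C' (- a) |- _ ] =>
      assert ((2 - a) * (lam * Rpower A' (- a) - Rpower C' (- a)) < (2 - a) * (lam * Rpower A (- a) - Rpower C (- a)))
    end.
    { apply Rmult_lt_compat_l; [lra|]. nra. }
    lra.
  - exfalso.
    specialize (K1 ltac:(lra)). specialize (K2' ltac:(lra)).
    assert (Dv R0 lam Nm Nf a (s1' + s2') s1' m1' (m1' + m2') < Dv R0 lam Nm Nf a (s1 + s2) s1 m1 (m1 + m2)).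
    { apply cmp; auto; lra. }
    lra.
  - exfalso.
    specialize (K3 ltac:(lra)). specialize (K4' ltac:(lra)).
    assert (Dv R0 lam Nm Nf a (s1' + s2') s2' m2' (m1' + m2') < Dv R0 lam Nm Nf a (s1 + s2) s2 m2 (m1 + m2)).
    { apply cmp; auto; lra. }
    lra.
  - split; lra.
Qed.

Lemma ne_facts R0 lam Nm Nf a B1 B2 B10 B20 m1 s1 m2 s2 :
  prm R0 lam Nm Nf a -> 0 < B1 -> 0 < B2 -> 0 <= B10 -> 0 <= B20 -> (B10 < B1 \/ B20 < B2) ->
  is_NE R0 lam Nm Nf a B1 B2 B10 B20 m1 s1 m2 s2 ->
  facts R0 lam Nm Nf a B1 B2 B10 B20 m1 s1 m2 s2.
Proof.
  intros Hp HB1 HB2 HB10 HB20 Hnd (F1&F2&BR1&BR2).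
  change (BR R0 lam Nm Nf a B1 B10 m1 s1 m2 s2) in BR1.
  change (BR R0 lam Nm Nf a B2 B20 m2 s2 m1 s1) in BR2.
  pose proof F1 as (Hm1&Hs1&_). pose proof F2 as (Hm2&Hs2&_).
  pose proof (tight _ _ _ _ _ _ _ _ _ _ _ Hp F1 Hm2 BR1) as T1.
  pose proof (tight _ _ _ _ _ _ _ _ _ _ _ Hp F2 Hm1 BR2) as T2.
  assert (HS : 0 < s1 + s2).
  { destruct (Rlt_le_dec 0 (s1 + s2)) as [|HS]; [auto|exfalso].
    assert (s2 = 0) by lra. subst s2.
    pose proof (spos _ _ _ _ _ _ _ _ _ _ Hp HB1 HB10 F1 Hm2 BR1). lra. }
  assert (HM : 0 < m1 + m2).
  { destruct (Rlt_le_dec 0 (m1 + m2)) as [|HM]; [auto|exfalso].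
    assert (m1 = 0) by lra. assert (m2 = 0) by lra. destruct Hnd as [Hnd|Hnd].
    - subst m2. pose proof (mpos _ _ _ _ _ _ _ _ _ _ Hp Hnd HB10 F1 (Rle_trans _ _ _ HB20 Hs2) BR1). lra.
    - subst m1. pose proof (mpos _ _ _ _ _ _ _ _ _ _ Hp Hnd HB20 F2 (Rle_trans _ _ _ HB10 Hs1) BR2). lra. }
  pose proof (kkt _ _ _ _ _ _ _ _ _ _ _ Hp F1 Hm2 (Rle_trans _ _ _ HB20 Hs2) BR1 HS HM) as [K1 K2].
  pose proof (kkt _ _ _ _ _ _ _ _ _ _ _ Hp F2 Hm1 (Rle_trans _ _ _ HB10 Hs1) BR2
     ltac:(rewrite Rplus_comm; exact HS) ltac:(rewrite Rplus_comm; exact HM)) as [K3 K4].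
  rewrite (Rplus_comm s2 s1), (Rplus_comm m2 m1) in K3, K4.
  unfold facts. repeat split; auto; lra.
Qed.

Definition pSf a cS S := Rpower (cS * S) (- a).
Definition pMf a cM B S := Rpower (cM * (B - S)) (- a).
Definition kap lam a cS cM B S := a * lam * pSf a cS S / S + a * pMf a cM B S / (B - S).
Definition Af lam a cS cM B Bi S := lam * pSf a cS S - pMf a cM B S + a * pMf a cM B S * Bi / (B - S).
Definition iota lam a cS cM B Bi S := Af lam a cS cM B Bi S / kap lam a cS cM B S.
Definition sig lam a cS cM B Bi Bi0 S := Rmin Bi (Rmax Bi0 (iota lam a cS cM B Bi S)).

Lemma kap_pos lam a cS cM B S : 0 < lam -> 0 < a -> 0 < S < B -> 0 < kap lam a cS cM B S.
Proof.
  intros. unfold kap. assert (0 < pSf a cS S) by apply Rpow_pos. assert (0 < pMf a cM B S) by apply Rpow_pos.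
  apply Rplus_lt_0_compat; apply Rdiv_lt_0_compat; try nra. apply Rmult_lt_0_compat; nra.
Qed.

Lemma Dv_lin R0 lam Nm Nf a B Bi S s : 0 < S < B ->
  Dv R0 lam Nm Nf a S s (Bi - s) (B - S) =
  Af lam a (lam * R0 / Nf) (R0 / Nm) B Bi S - kap lam a (lam * R0 / Nf) (R0 / Nm) B S * s.
Proof. intros. unfold Dv, Af, kap, pSf, pMf. field. lra. Qed.

Lemma sig_bounds lam a cS cM B Bi Bi0 S : Bi0 <= Bi ->
  Bi0 <= sig lam a cS cM B Bi Bi0 S <= Bi.
Proof.
  intros H. unfold sig. split.
  - apply Rmin_glb; [lra|apply Rmax_l].
  - apply Rmin_l.
Qed.

Lemma player_ok R0 lam Nm Nf a B Bi Bi0 S0 om os : prm R0 lam Nm Nf a ->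
  0 <= Bi0 <= Bi -> 0 < S0 < B -> 0 <= om -> 0 <= os ->
  sig lam a (lam * R0 / Nf) (R0 / Nm) B Bi Bi0 S0 + os = S0 ->
  (Bi - sig lam a (lam * R0 / Nf) (R0 / Nm) B Bi Bi0 S0) + om = B - S0 ->
  BR R0 lam Nm Nf a Bi Bi0 (Bi - sig lam a (lam * R0 / Nf) (R0 / Nm) B Bi Bi0 S0)
     (sig lam a (lam * R0 / Nf) (R0 / Nm) B Bi Bi0 S0) om os.
Proof.
  intros Hp HBi HS0 Hom Hos E1 E2.
  pose proof (sig_bounds lam a (lam * R0 / Nf) (R0 / Nm) B Bi Bi0 S0 (proj2 HBi)) as Hb.
  pose proof Hp as (HR0&Hl&HNm&HNf&Ha).
  set (s := sig lam a (lam * R0 / Nf) (R0 / Nm) B Bi Bi0 S0) in *.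
  set (k := kap lam a (lam * R0 / Nf) (R0 / Nm) B S0).
  set (A := Af lam a (lam * R0 / Nf) (R0 / Nm) B Bi S0).
  set (io := iota lam a (lam * R0 / Nf) (R0 / Nm) B Bi S0).
  assert (Hk : 0 < k) by (apply kap_pos; lra).
  assert (EA : A = k * io) by (unfold io, iota; fold A k; field; lra).
  assert (ED : Dv R0 lam Nm Nf a (s + os) s (Bi - s) (Bi - s + om) = A - k * s).
  { rewrite E1, E2. apply Dv_lin. lra. }
  apply suff; try lra.
  - exact Hp.
  - unfold feasible; lra.
  - intro Hs. rewrite ED, EA.
    assert (s = Rmax Bi0 io).
    { unfold s, sig. fold io. unfold Rmin. destruct (Rle_dec Bi (Rmax Bi0 io)); [|reflexivity].
      exfalso. unfold s, sig in Hs. fold io in Hs. rewrite Rmin_left in Hs; lra. }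
    assert (io <= s) by (rewrite H; apply Rmax_r).
    assert (k * io <= k * s) by (apply Rmult_le_compat_l; lra). lra.
  - intro Hs. rewrite ED, EA.
    assert (s <= Rmax Bi0 io) by (unfold s, sig; fold io; apply Rmin_r).
    assert (io <= Bi0 \/ Bi0 < io) as [Hc|Hc] by lra.
    + rewrite Rmax_left in H by lra. lra.
    + rewrite Rmax_right in H by lra.
      assert (k * s <= k * io) by (apply Rmult_le_compat_l; lra). lra.
Qed.

Lemma cont_plus (f g : R -> R) x : continuous f x -> continuous g x -> continuous (fun y => f y + g y) x.
Proof. intros; now apply (continuous_plus f g). Qed.
Lemma cont_mult (f g : R -> R) x : continuous f x -> continuous g x -> continuous (fun y => f y * g y) x.
Proof. intros; now apply (continuous_mult f g). Qed.
Lemma cont_opp (f : R -> R) x : continuous f x -> continuous (fun y => - f y) x.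
Proof. intros; now apply (continuous_opp f). Qed.
Lemma cont_const (c : R) x : continuous (fun _ : R => c) x.
Proof. apply continuous_const. Qed.

Lemma cont_Rmax c (f : R -> R) x : continuous f x -> continuous (fun y => Rmax c (f y)) x.
Proof.
  intro H.
  apply continuous_ext with (f := fun y => ((c + f y) + Rabs (f y + - c)) * / 2).
  - intro y. cbn -[Rabs Rle_dec]. unfold Rmax. destruct (Rle_dec c (f y)).
    + rewrite Rabs_right by lra. field.
    + rewrite Rabs_left by lra. field.
  - apply cont_mult; [|apply cont_const].
    apply cont_plus; [apply cont_plus; [apply cont_const|exact H]|].
    apply continuous_Rabs_comp. apply cont_plus; [exact H|apply cont_const].
Qed.

Lemma cont_Rmin c (f : R -> R) x : continuous f x -> continuous (fun y => Rmin c (f y)) x.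
Proof.
  intro H.
  apply continuous_ext with (f := fun y => ((c + f y) + - Rabs (f y + - c)) * / 2).
  - intro y. cbn -[Rabs Rle_dec]. unfold Rmin. destruct (Rle_dec c (f y)).
    + rewrite Rabs_right by lra. field.
    + rewrite Rabs_left by lra. field.
  - apply cont_mult; [|apply cont_const].
    apply cont_plus; [apply cont_plus; [apply cont_const|exact H]|].
    apply cont_opp.
    apply continuous_Rabs_comp. apply cont_plus; [exact H|apply cont_const].
Qed.
Lemma iota_cont lam a cS cM B Bi S : 0 < lam -> 0 < a -> 0 < cS -> 0 < cM -> 0 < S < B ->
  continuous (iota lam a cS cM B Bi) S.
Proof.
  intros Hl Ha HcS HcM HS.
  pose proof (kap_pos lam a cS cM B S Hl Ha HS) as Hk.
  apply (ex_derive_continuous (V := R_NormedModule) (iota lam a cS cM B Bi)).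
  unfold iota, Af, kap, pSf, pMf in *. unfold Rpower in *.
  auto_derive. unfold Rminus, Rdiv in Hk.
  repeat split; try (apply Rmult_lt_0_compat; lra); lra.
Qed.

Lemma sig_cont lam a cS cM B Bi Bi0 S : 0 < lam -> 0 < a -> 0 < cS -> 0 < cM -> 0 < S < B ->
  continuous (sig lam a cS cM B Bi Bi0) S.
Proof.
  intros. unfold sig. apply cont_Rmin. apply cont_Rmax. apply iota_cont; auto.
Qed.

Lemma root_ne R0 lam Nm Nf a B1 B2 B10 B20 S0 : prm R0 lam Nm Nf a ->
  0 <= B10 <= B1 -> 0 <= B20 <= B2 -> 0 < S0 < B1 + B2 ->
  sig lam a (lam * R0 / Nf) (R0 / Nm) (B1 + B2) B1 B10 S0 +
  sig lam a (lam * R0 / Nf) (R0 / Nm) (B1 + B2) B2 B20 S0 = S0 ->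
  is_NE R0 lam Nm Nf a B1 B2 B10 B20
    (B1 - sig lam a (lam * R0 / Nf) (R0 / Nm) (B1 + B2) B1 B10 S0)
    (sig lam a (lam * R0 / Nf) (R0 / Nm) (B1 + B2) B1 B10 S0)
    (B2 - sig lam a (lam * R0 / Nf) (R0 / Nm) (B1 + B2) B2 B20 S0)
    (sig lam a (lam * R0 / Nf) (R0 / Nm) (B1 + B2) B2 B20 S0).
Proof.
  intros Hp HB1 HB2 HS0 E.
  pose proof (sig_bounds lam a (lam * R0 / Nf) (R0 / Nm) (B1 + B2) B1 B10 S0 (proj2 HB1)) as Hb1.
  pose proof (sig_bounds lam a (lam * R0 / Nf) (R0 / Nm) (B1 + B2) B2 B20 S0 (proj2 HB2)) as Hb2.
  split; [unfold feasible; lra|]. split; [unfold feasible; lra|]. split.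
  - apply (player_ok R0 lam Nm Nf a (B1 + B2) B1 B10 S0); auto; lra.
  - apply (player_ok R0 lam Nm Nf a (B1 + B2) B2 B20 S0); auto; lra.
Qed.

Lemma sst_prop R0 lam Nm Nf a B : prm R0 lam Nm Nf a -> 0 < B ->
  0 < Nf * Rpower lam (1 / a - 1) * B / (Nf * Rpower lam (1 / a - 1) + Nm) < B /\
  lam * pSf a (lam * R0 / Nf) (Nf * Rpower lam (1 / a - 1) * B / (Nf * Rpower lam (1 / a - 1) + Nm)) =
  pMf a (R0 / Nm) B (Nf * Rpower lam (1 / a - 1) * B / (Nf * Rpower lam (1 / a - 1) + Nm)).
Proof.
  intros Hp HB. pose proof Hp as (HR0&Hl&HNm&HNf&Ha).
  set (L := Rpower lam (1 / a - 1)).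
  assert (HL : 0 < L) by apply Rpow_pos.
  assert (HD : 0 < Nf * L + Nm) by nra.
  split; [split|].
  - apply Rdiv_lt_0_compat; [|lra]. apply Rmult_lt_0_compat; nra.
  - apply (Rmult_lt_reg_r (Nf * L + Nm)); [lra|].
    replace (Nf * L * B / (Nf * L + Nm) * (Nf * L + Nm)) with (Nf * L * B) by (field; lra). nra.
  - unfold pSf, pMf.
    set (Y := R0 * B / (Nf * L + Nm)).
    assert (HY : 0 < Y) by (unfold Y; apply Rdiv_lt_0_compat; nra).
    assert (E1 : lam * R0 / Nf * (Nf * L * B / (Nf * L + Nm)) = Rpower lam (1 / a) * Y).
    { replace (Rpower lam (1 / a)) with (lam * L).
      - unfold Y. field. split; lra.
      - unfold L. rewrite <- (Rpower_1 lam) at 1 by lra. rewrite <- Rpower_plus. f_equal. ring. }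
    assert (E2 : R0 / Nm * (B - Nf * L * B / (Nf * L + Nm)) = Y).
    { unfold Y. field. split; lra. }
    rewrite E1, E2.
    rewrite <- Rpower_mult_distr by (try apply Rpow_pos; lra).
    rewrite Rpower_mult. replace (1 / a * - a) with (- (1)) by (field; lra).
    rewrite Rpower_Ropp, Rpower_1 by lra. field. lra.
Qed.

Lemma iota_sst R0 lam Nm Nf a B Bi S : prm R0 lam Nm Nf a -> 0 < S < B ->
  lam * pSf a (lam * R0 / Nf) S = pMf a (R0 / Nm) B S ->
  iota lam a (lam * R0 / Nf) (R0 / Nm) B Bi S = Bi * S / B.
Proof.
  intros Hp HS E. pose proof Hp as (HR0&Hl&HNm&HNf&Ha).
  unfold iota, Af, kap.
  assert (HpM : 0 < pMf a (R0 / Nm) B S) by apply Rpow_pos.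
  replace (a * lam * pSf a (lam * R0 / Nf) S) with (a * (lam * pSf a (lam * R0 / Nf) S)) by ring.
  rewrite E. field. repeat split; try lra. 
  replace (a * pMf a (R0 / Nm) B S * (B - S) + a * pMf a (R0 / Nm) B S * S) with (a * pMf a (R0 / Nm) B S * B) by ring.
  apply Rgt_not_eq. apply Rmult_lt_0_compat; [|lra]. apply Rmult_lt_0_compat; lra.
Qed.

Lemma iota_hi R0 lam Nm Nf a B Bi S : prm R0 lam Nm Nf a -> B / 2 <= S < B -> 0 <= Bi ->
  2 * lam * pSf a (lam * R0 / Nf) S <= (1 - a) * pMf a (R0 / Nm) B S ->
  iota lam a (lam * R0 / Nf) (R0 / Nm) B Bi S <= Bi - (B - S).
Proof.
  intros Hp HS HBi Hq. pose proof Hp as (HR0&Hl&HNm&HNf&Ha).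
  assert (HB : 0 < B) by lra.
  set (pS := pSf a (lam * R0 / Nf) S) in *. set (pM := pMf a (R0 / Nm) B S) in *.
  assert (HpS : 0 < pS) by apply Rpow_pos.
  set (k := kap lam a (lam * R0 / Nf) (R0 / Nm) B S).
  assert (Hk : 0 < k) by (apply kap_pos; lra).
  set (x := (B - S - Bi) / S).
  assert (Hx : x <= 1).
  { unfold x. apply (Rmult_le_reg_r S); [lra|]. replace ((B - S - Bi) / S * S) with (B - S - Bi) by (field; lra). lra. }
  assert (Hax : a * x <= 1) by nra.
  assert (Id : Af lam a (lam * R0 / Nf) (R0 / Nm) B Bi S - k * (Bi - (B - S)) = lam * pS * (1 + a * x) - pM * (1 - a)).
  { unfold k, kap, Af, x. fold pS pM. field. lra. }
  assert (lam * pS * (1 + a * x) <= lam * pS * 2) by (apply Rmult_le_compat_l; nra).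
  assert (HA : Af lam a (lam * R0 / Nf) (R0 / Nm) B Bi S <= k * (Bi - (B - S))) by nra.
  unfold iota. fold k. apply (Rmult_le_reg_r k); [lra|].
  replace (Af lam a (lam * R0 / Nf) (R0 / Nm) B Bi S / k * k) with (Af lam a (lam * R0 / Nf) (R0 / Nm) B Bi S) by (field; lra).
  lra.
Qed.

Lemma shi_exists R0 lam Nm Nf a B1 B2 B10 B20 : prm R0 lam Nm Nf a -> 0 < B1 -> 0 < B2 ->
  0 <= B10 <= B1 -> 0 <= B20 <= B2 -> B10 + B20 < B1 + B2 ->
  exists Shi, (B1 + B2) / 2 <= Shi < B1 + B2 /\
    2 * lam * pSf a (lam * R0 / Nf) Shi <= (1 - a) * pMf a (R0 / Nm) (B1 + B2) Shi /\
    sig lam a (lam * R0 / Nf) (R0 / Nm) (B1 + B2) B1 B10 Shi +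
    sig lam a (lam * R0 / Nf) (R0 / Nm) (B1 + B2) B2 B20 Shi <= Shi.
Proof.
  intros Hp HB1 HB2 HB10 HB20 Hnd. pose proof (cpos _ _ _ _ _ Hp) as [HcS HcM].
  pose proof Hp as (HR0&Hl&HNm&HNf&Ha).
  set (B := B1 + B2) in *.
  set (cS := lam * R0 / Nf) in *. set (cM := R0 / Nm) in *.
  set (P0 := Rpower (cS * (B / 2)) (- a)).
  assert (HP0 : 0 < P0) by apply Rpow_pos.
  set (Q := 2 * lam * P0 / (1 - a)).
  assert (HQ : 0 < Q) by (unfold Q; apply Rdiv_lt_0_compat; [apply Rmult_lt_0_compat|]; lra).
  set (MQ := Rpower Q (- / a) / cM).
  assert (HMQ : 0 < MQ) by (unfold MQ; apply Rdiv_lt_0_compat; [apply Rpow_pos|lra]).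
  assert (EQ : Rpower (cM * MQ) (- a) = Q).
  { unfold MQ. replace (cM * (Rpower Q (- / a) / cM)) with (Rpower Q (- / a)) by (field; lra).
    rewrite Rpower_mult. replace (- / a * - a) with 1 by (field; lra). apply Rpower_1; lra. }
  set (M := Rmin (B - B10 - B20) (Rmin (B / 2) MQ)).
  assert (HM0 : 0 < M) by (unfold M; repeat apply Rmin_case; lra).
  assert (HM1 : M <= B - B10 - B20) by apply Rmin_l.
  assert (HM2 : M <= B / 2) by (unfold M; eapply Rle_trans; [apply Rmin_r|apply Rmin_l]).
  assert (HM3 : M <= MQ) by (unfold M; eapply Rle_trans; [apply Rmin_r|apply Rmin_r]).
  exists (B - M).
  assert (Hq : 2 * lam * pSf a cS (B - M) <= (1 - a) * pMf a cM B (B - M)).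
  { unfold pSf, pMf. replace (B - (B - M)) with M by ring.
    assert (Rpower (cS * (B - M)) (- a) <= P0).
    { unfold P0. apply Rpow_neg_le; [lra|]. split; [nra|]. apply Rmult_le_compat_l; lra. }
    assert (Q <= Rpower (cM * M) (- a)).
    { rewrite <- EQ. apply Rpow_neg_le; [lra|]. split; [nra|]. apply Rmult_le_compat_l; lra. }
    assert (2 * lam * P0 = (1 - a) * Q) by (unfold Q; field; lra).
    assert ((1 - a) * Q <= (1 - a) * Rpower (cM * M) (- a)) by (apply Rmult_le_compat_l; lra).
    assert (2 * lam * Rpower (cS * (B - M)) (- a) <= 2 * lam * P0) by (apply Rmult_le_compat_l; lra).
    lra. }
  split; [lra|]. split; [exact Hq|].
  pose proof (iota_hi R0 lam Nm Nf a B B1 (B - M) Hp ltac:(lra) ltac:(lra) Hq) as I1.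
  pose proof (iota_hi R0 lam Nm Nf a B B2 (B - M) Hp ltac:(lra) ltac:(lra) Hq) as I2.
  fold cS cM in I1, I2.
  replace (B - (B - M)) with M in I1, I2 by ring.
  assert (S1 : sig lam a cS cM B B1 B10 (B - M) <= Rmax B10 (B1 - M)).
  { unfold sig. eapply Rle_trans; [apply Rmin_r|]. apply Rle_max_compat_l. exact I1. }
  assert (S2 : sig lam a cS cM B B2 B20 (B - M) <= Rmax B20 (B2 - M)).
  { unfold sig. eapply Rle_trans; [apply Rmin_r|]. apply Rle_max_compat_l. exact I2. }
  unfold Rmax in S1, S2.
  destruct (Rle_dec B10 (B1 - M)); destruct (Rle_dec B20 (B2 - M)); unfold B in *; lra.
Qed.

Lemma exist_nd R0 lam Nm Nf a B1 B2 B10 B20 : prm R0 lam Nm Nf a -> 0 < B1 -> 0 < B2 ->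
  0 <= B10 <= B1 -> 0 <= B20 <= B2 -> (B10 < B1 \/ B20 < B2) ->
  exists m1 s1 m2 s2, is_NE R0 lam Nm Nf a B1 B2 B10 B20 m1 s1 m2 s2 /\
    BS_NE lam Nm Nf a B1 + BS_NE lam Nm Nf a B2 <= s1 + s2.
Proof.
  intros Hp HB1 HB2 HB10 HB20 Hnd. pose proof (cpos _ _ _ _ _ Hp) as [HcS HcM].
  pose proof Hp as (HR0&Hl&HNm&HNf&Ha).
  destruct (sst_prop R0 lam Nm Nf a (B1 + B2) Hp ltac:(lra)) as [HSst ESst].
  set (L := Rpower lam (1 / a - 1)) in *.
  assert (HL : 0 < L) by apply Rpow_pos.
  set (Sst := Nf * L * (B1 + B2) / (Nf * L + Nm)) in *.
  assert (EBS : BS_NE lam Nm Nf a B1 + BS_NE lam Nm Nf a B2 = Sst).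
  { unfold BS_NE, Sst. fold L. field. nra. }
  rewrite EBS.
  set (F := fun S => sig lam a (lam * R0 / Nf) (R0 / Nm) (B1 + B2) B1 B10 S +
                     sig lam a (lam * R0 / Nf) (R0 / Nm) (B1 + B2) B2 B20 S - S).
  assert (F1 : 0 <= F Sst).
  { unfold F. 
    assert (forall Bi Bi0, 0 <= Bi0 <= Bi -> Bi * Sst / (B1 + B2) <= sig lam a (lam * R0 / Nf) (R0 / Nm) (B1 + B2) Bi Bi0 Sst).
    { intros Bi Bi0 HBi. unfold sig. rewrite iota_sst by (auto; lra).
      assert (Bi * Sst / (B1 + B2) <= Bi).
      { apply (Rmult_le_reg_r (B1 + B2)); [lra|].
        replace (Bi * Sst / (B1 + B2) * (B1 + B2)) with (Bi * Sst) by (field; lra). nra. }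
      apply Rmin_glb; [lra|apply Rmax_r]. }
    pose proof (H B1 B10 HB10). pose proof (H B2 B20 HB20).
    assert (B1 * Sst / (B1 + B2) + B2 * Sst / (B1 + B2) = Sst) by (field; lra).
    lra. }
  destruct (shi_exists R0 lam Nm Nf a B1 B2 B10 B20 Hp HB1 HB2 HB10 HB20 ltac:(lra)) as (Shi & HShi & Hq & F2').
  assert (F2 : F Shi <= 0) by (unfold F; lra).
  assert (Hlt : Sst < Shi).
  { destruct (Rlt_le_dec Sst Shi) as [|Hge]; [auto|exfalso].
    unfold pSf, pMf in *.
    assert (Rpower (lam * R0 / Nf * Sst) (- a) <= Rpower (lam * R0 / Nf * Shi) (- a)).
    { apply Rpow_neg_le; [lra|]. split; [nra|]. apply Rmult_le_compat_l; lra. }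
    assert (Rpower (R0 / Nm * (B1 + B2 - Shi)) (- a) <= Rpower (R0 / Nm * (B1 + B2 - Sst)) (- a)).
    { apply Rpow_neg_le; [lra|]. split; [nra|]. apply Rmult_le_compat_l; lra. }
    assert (0 < Rpower (lam * R0 / Nf * Shi) (- a)) by apply Rpow_pos.
    assert (0 < Rpower (R0 / Nm * (B1 + B2 - Shi)) (- a)) by apply Rpow_pos.
    assert (lam * Rpower (lam * R0 / Nf * Sst) (- a) <= lam * Rpower (lam * R0 / Nf * Shi) (- a)) by (apply Rmult_le_compat_l; lra).
    nra. }
  assert (HS0 : exists S0, Sst <= S0 <= Shi /\ F S0 = 0).
  { destruct (Req_dec (F Sst) 0) as [E|E]; [exists Sst; split; [lra|exact E]|].
    destruct (Req_dec (F Shi) 0) as [E'|E']; [exists Shi; split; [lra|exact E']|].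
    destruct (Ranalysis5.IVT_interv (fun S => - F S) Sst Shi) as (S0 & HS0 & ES0).
    - intros x Hx. apply continuity_pt_filterlim. change (continuous (fun S => - F S) x).
      apply cont_opp. unfold F.
      apply cont_plus; [apply cont_plus|apply cont_opp; apply continuous_id].
      + apply sig_cont; lra.
      + apply sig_cont; lra.
    - exact Hlt.
    - lra.
    - lra.
    - exists S0. split; [exact HS0|lra]. }
  destruct HS0 as (S0 & HS0 & ES0).
  unfold F in ES0.
  exists (B1 - sig lam a (lam * R0 / Nf) (R0 / Nm) (B1 + B2) B1 B10 S0),
         (sig lam a (lam * R0 / Nf) (R0 / Nm) (B1 + B2) B1 B10 S0),
         (B2 - sig lam a (lam * R0 / Nf) (R0 / Nm) (B1 + B2) B2 B20 S0),
         (sig lam a (lam * R0 / Nf) (R0 / Nm) (B1 + B2) B2 B20 S0).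
  split.
  - apply root_ne; auto; lra.
  - lra.
Qed.

Theorem theorem2 (R0 lam Nm Nf alpha B1 B2 B10 B20 : R) :
  0 < R0 -> 1 < lam -> 0 < Nm -> 0 < Nf -> 0 < alpha < 1 ->
  0 < B1 -> 0 < B2 -> 0 <= B10 <= B1 -> 0 <= B20 <= B2 ->
  exists b1M b1S b2M b2S : R,
    is_NE R0 lam Nm Nf alpha B1 B2 B10 B20 b1M b1S b2M b2S /\
    (forall c1M c1S c2M c2S : R,
       is_NE R0 lam Nm Nf alpha B1 B2 B10 B20 c1M c1S c2M c2S ->
       c1M = b1M /\ c1S = b1S /\ c2M = b2M /\ c2S = b2S) /\
    BS_NE lam Nm Nf alpha B1 + BS_NE lam Nm Nf alpha B2 <= b1S + b2S.
Proof.
  intros HR0 Hl HNm HNf Ha HB1 HB2 HB10 HB20.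
  assert (Hp : prm R0 lam Nm Nf alpha) by (repeat split; lra).
  destruct (Rlt_le_dec B10 B1) as [Hn1|Hd1];
  [|destruct (Rlt_le_dec B20 B2) as [Hn2|Hd2]].
  1,2: assert (Hnd : B10 < B1 \/ B20 < B2) by lra;
    destruct (exist_nd R0 lam Nm Nf alpha B1 B2 B10 B20 Hp HB1 HB2 HB10 HB20 Hnd)
      as (m1 & s1 & m2 & s2 & HNE & Hlow);
    exists m1, s1, m2, s2; split; [exact HNE|]; split; [|exact Hlow];
    intros c1M c1S c2M c2S HNE';
    pose proof (ne_facts _ _ _ _ _ _ _ _ _ _ _ _ _ Hp HB1 HB2 (proj1 HB10) (proj1 HB20) Hnd HNE) as Fx;
    pose proof (ne_facts _ _ _ _ _ _ _ _ _ _ _ _ _ Hp HB1 HB2 (proj1 HB10) (proj1 HB20) Hnd HNE') as Fy;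
    destruct (Rle_dec (s1 + s2) (c1S + c2S)) as [Hle|Hle];
    [ destruct (uniq_le _ _ _ _ _ _ _ _ _ _ _ _ _ _ _ _ _ Hp (proj1 HB10) (proj1 HB20) Fx Fy Hle) as [E1 E2]
    | destruct (uniq_le _ _ _ _ _ _ _ _ _ _ _ _ _ _ _ _ _ Hp (proj1 HB10) (proj1 HB20) Fy Fx ltac:(lra)) as [E1 E2] ];
    destruct Fx as (Ex1&Ex2&_); destruct Fy as (Ey1&Ey2&_);
    repeat split; lra.
  assert (E1 : B10 = B1) by lra. assert (E2 : B20 = B2) by lra. subst B10 B20.
  exists 0, B1, 0, B2.
  assert (Hf : forall B cM cS, feasible B B cM cS -> cM = 0 /\ cS = B).
  { intros B cM cS (H1&H2&H3). split; lra. }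
  split; [|split].
  - split; [unfold feasible; lra|]. split; [unfold feasible; lra|]. split.
    + intros cM cS Hc. destruct (Hf _ _ _ Hc); subst. lra.
    + intros cM cS Hc. destruct (Hf _ _ _ Hc); subst. lra.
  - intros c1M c1S c2M c2S (F1&F2&_). destruct (Hf _ _ _ F1). destruct (Hf _ _ _ F2). repeat split; auto.
  - destruct (sst_prop R0 lam Nm Nf alpha (B1 + B2) Hp ltac:(lra)) as [HSst _].
    assert (HL : 0 < Rpower lam (1 / alpha - 1)) by apply Rpow_pos.
    replace (BS_NE lam Nm Nf alpha B1 + BS_NE lam Nm Nf alpha B2) with
      (Nf * Rpower lam (1 / alpha - 1) * (B1 + B2) / (Nf * Rpower lam (1 / alpha - 1) + Nm))
      by (unfold BS_NE; field; nra).
    lra.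
Qed.
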